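(* Let $n_1,n_2$ be distinct odd primes with $\gcd(n_1-1,n_2-1)=6$, $n=n_1n_2$, and let $D_0,\dots,D_5$ be the Whiteman generalized cyclotomic classes of order 6 modulo $n$ (see context). Let $q$ be a power of a prime $p$ with $\gcd(q,n)=1$, and let $\beta$ be a primitive $n$-th root of unity in an extension of $\mathrm{GF}(q)$. Let $N_1=\{n_1,\dots,(n_2-1)n_1\}$, $N_2=\{n_2,\dots,(n_1-1)n_2\}$, and $S(x)=\sum_{i\in N_1\cup D_0\cup D_1\cup D_2}x^i$, $T(x)=\sum_{i\in N_1\cup D_1\cup D_2\cup D_3}x^i$, $M(x)=\sum_{i\in N_1\cup D_2\cup D_3\cup D_4}x^i$ in $\mathrm{GF}(q)[x]$. Then for $a\in\mathbb{Z}_n$: (1) $S(\beta^a)=T(\beta^a)=M(\beta^a)=-\frac{n_1+1}{2}\bmod p$ if $a\in N_1$, and $=\frac{n_2-1}{2}\bmod p$ if $a\in N_2$; (2) $S(\beta^a)$ equals $S(\beta),\ T(\beta),\ M(\beta),\ -(S(\beta)+1),\ -(T(\beta)+1),\ -(M(\beta)+1)$ according as $a\in D_0,D_1,D_2,D_3,D_4,D_5$ respectively; (3) $T(\beta^a)$ equals $T(\beta),\ M(\beta),\ -(S(\beta)+1),\ -(T(\beta)+1),\ -(M(\beta)+1),\ S(\beta)$ according as $a\in D_0,D_1,D_2,D_3,D_4,D_5$ respectively; (4) $M(\beta^a)$ equals $M(\beta),\ -(S(\beta)+1),\ -(T(\beta)+1),\ -(M(\beta)+1),\ S(\beta),\ T(\beta)$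 according as $a\in D_0,D_1,D_2,D_3,D_4,D_5$ respectively.
   Context: Let $e=(n_1-1)(n_2-1)/6$, $g$ a common primitive root of $n_1$ and $n_2$, $u$ an integer with $u\equiv g\pmod{n_1}$, $u\equiv 1\pmod{n_2}$, and $D_i=\{g^su^i\bmod n: s=0,\dots,e-1\}$ for $i=0,\dots,5$; these partition $\mathbb{Z}_n^*$. An integer ''mod $p$'' denotes its image in the prime field $\mathrm{GF}(p)$. *)

(* Defs.v *)
From HB Require Import structures.
From mathcomp Require Import all_boot all_order all_algebra fieldext.
Set Implicit Arguments. Unset Strict Implicit. Unset Printing Implicit Defensive.
Import GRing.Theory.
Local Open Scope ring_scope.

Definition prim_root_mod (m g : nat) : bool :=
  [&& coprime g m, (g ^ totient m == 1 %[mod m])%N &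
      [forall k : 'I_(totient m), (0 < k)%N ==> (g ^ k != 1 %[mod m])%N]].

Definition wh_e (n1 n2 : nat) : nat := ((n1 - 1) * (n2 - 1) %/ 6)%N.

Definition whD (n1 n2 g u i : nat) : seq nat :=
  [seq (g ^ s * u ^ i %% (n1 * n2))%N | s <- iota 0 (wh_e n1 n2)].

Definition whN1 (n1 n2 : nat) : seq nat := [seq (k * n1)%N | k <- iota 1 (n2 - 1)].
Definition whN2 (n1 n2 : nat) : seq nat := [seq (k * n2)%N | k <- iota 1 (n1 - 1)].

Definition setpoly (K : nzRingType) (n : nat) (A : pred nat) : {poly K} :=
  \sum_(i < n | A i) 'X^i.

Definition S_poly (K : nzRingType) (n1 n2 g u : nat) : {poly K} :=
  setpoly K (n1 * n2) (fun i => [|| i \in whN1 n1 n2, i \in whD n1 n2 g u 0,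
                                    i \in whD n1 n2 g u 1 | i \in whD n1 n2 g u 2]).
Definition T_poly (K : nzRingType) (n1 n2 g u : nat) : {poly K} :=
  setpoly K (n1 * n2) (fun i => [|| i \in whN1 n1 n2, i \in whD n1 n2 g u 1,
                                    i \in whD n1 n2 g u 2 | i \in whD n1 n2 g u 3]).
Definition M_poly (K : nzRingType) (n1 n2 g u : nat) : {poly K} :=
  setpoly K (n1 * n2) (fun i => [|| i \in whN1 n1 n2, i \in whD n1 n2 g u 2,
                                    i \in whD n1 n2 g u 3 | i \in whD n1 n2 g u 4]).

Definition evalL (K : fieldType) (L : fieldExtType K) (P : {poly K}) (x : L) : L :=
  (map_poly (in_alg L) P).[x].

(* Main.v *)
Require Import Defs.
From HB Require Import structures.
From mathcomp Require Import all_boot all_order all_algebra fieldext.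
From mathcomp Require Import zify ring.
Import GRing.Theory.
Lemma prim_coprime p g : prim_root_mod p g -> coprime g p.
Proof. by case/and3P. Qed.

Lemma prim_fermat p g : prime p -> prim_root_mod p g -> g ^ p.-1 = 1 %[mod p].
Proof. by move=> pp /and3P[_ /eqP + _]; rewrite totient_prime. Qed.

Lemma prim_modexp p g r : prime p -> prim_root_mod p g ->
  g ^ r = g ^ (r %% p.-1) %[mod p].
Proof.
move=> pp pg; rewrite {1}(divn_eq r p.-1) expnD [_ * p.-1]mulnC expnM.
by rewrite -modnMml -modnXm prim_fermat // modnXm exp1n modnMml mul1n.
Qed.

Lemma prim_one p g k : prime p -> prim_root_mod p g -> g ^ k = 1 %[mod p] ->
  p.-1 %| k.
Proof.
move=> pp pg gk; have p1: 0 < p.-1 by have := prime_gt1 pp; lia.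
have := pg; case/and3P=> _ _ /forallP H.
have lt: k %% p.-1 < totient p by rewrite totient_prime // ltn_pmod.
have E := prim_modexp p g k pp pg.
move: (H (Ordinal lt)) => /=; rewrite /dvdn; move: E lt.
by case: (k %% p.-1) => // m E _; rewrite -E gk eqxx.
Qed.

Lemma prim_gpos p g : prime p -> prim_root_mod p g -> 0 < g.
Proof.
move=> pp /prim_coprime; case: g => //; rewrite /coprime gcd0n.
by move=> /eqP p1; move: pp; rewrite p1.
Qed.

Lemma prim_inj p g i j : prime p -> prim_root_mod p g ->
  g ^ i = g ^ j %[mod p] -> i = j %[mod p.-1].
Proof.
move=> pp pg.
wlog le: i j / i <= j.
  move=> W; case: (leqP i j) => [/W//|/ltnW/W H] E; by rewrite H.
move=> E; apply/eqP; rewrite eq_sym eqn_mod_dvd //; apply: (prim_one _ _ _ pp pg).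
apply/eqP; rewrite eqn_mod_dvd ?expn_gt0 ?(prim_gpos _ _ pp pg) //.
have cp : coprime p (g ^ i) by rewrite coprime_sym coprimeXl // prim_coprime.
rewrite -(Gauss_dvdr _ cp) mulnBr muln1 -expnD subnKC //.
by rewrite -eqn_mod_dvd ?E // leq_pexp2l // (prim_gpos _ _ pp pg).
Qed.

Lemma prim_nz p g r : prime p -> prim_root_mod p g -> g ^ r %% p != 0.
Proof.
move=> pp pg; apply/negP => H0; have {}H0 : p %| g ^ r by []; have cp : coprime (g ^ r) p.
  by rewrite coprimeXl // prim_coprime.
by move: cp; rewrite /coprime (gcdn_idPr H0) => /eqP p1; move: pp; rewrite p1.
Qed.

Lemma modn_cancel c m x y : coprime c m -> c * x = c * y %[mod m] -> x = y %[mod m].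
Proof.
wlog le: x y / y <= x.
  move=> W cp E; case: (leqP y x) => [le|lt]; first exact: W.
  by rewrite (W y x (ltnW lt) cp).
move=> cp /eqP E; apply/eqP; move: E.
rewrite !eqn_mod_dvd ?leq_mul2l ?le ?orbT // -mulnBr Gauss_dvdr //.
by rewrite coprime_sym.
Qed.

Local Open Scope ring_scope.

Lemma geo (R : fieldType) (z : R) m : z ^+ m = 1 -> z != 1 -> \sum_(i < m) z ^+ i = 0.
Proof.
move=> zm z1; have := subrX1 z m; rewrite zm subrr => /esym/eqP.
by rewrite mulf_eq0 subr_eq0 (negPf z1) => /eqP.
Qed.

Lemma shift_sum (R : nmodType) (f : nat -> R) d :
  (forall i, f (i + d)%N = f i) -> forall t, \sum_(s < d) f (s + t)%N = \sum_(s < d) f s.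
Proof.
move=> per t; elim: t => [|t IH]; first by apply: eq_bigr => i _; rewrite addn0.
case: d per IH => [|d] per IH; first by rewrite !big_ord0.
rewrite -IH big_ord_recr /= [in RHS]big_ord_recl /= addrC; congr (_ + _).
  by rewrite add0n -(per t) addnC addnS.
by apply: eq_bigr => i _; rewrite /bump /= add1n addnS addSn.
Qed.

Lemma block_sum (R : nmodType) (F : nat -> R) c d :
  \sum_(i < c * d) F i = \sum_(w < c) \sum_(t < d) F (w * d + t)%N.
Proof.
elim: c => [|c IH]; first by rewrite mul0n !big_ord0.
rewrite big_ord_recr /= -IH mulSn addnC big_split_ord /=.
by congr (_ + _).
Qed.

Lemma per_sum (R : nmodType) (F : nat -> R) c d :
  (forall i, F (i + d)%N = F i) -> \sum_(i < c * d) F i = (\sum_(t < d) F t) *+ c.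
Proof.
move=> per; rewrite block_sum (eq_bigr (fun _ => \sum_(t < d) F t)).
  by rewrite sumr_const card_ord.
move=> w _; apply: eq_bigr => t _; elim: (nat_of_ord w) => [|k IH] //.
by rewrite mulSn -addnA addnC per.
Qed.

Lemma sum_gpow (R : fieldType) p g (z : R) : prime p -> prim_root_mod p g ->
  z ^+ p = 1 -> z != 1 -> \sum_(r < p.-1) z ^+ (g ^ r)%N = -1.
Proof.
move=> pp pg zp z1.
have p0 : (0 < p)%N := prime_gt0 pp.
have hlt (r : 'I_p.-1) : ((g ^ r %% p).-1 < p.-1)%N.
  have := ltn_pmod (g ^ r) p0; have := prim_nz _ _ r pp pg; lia.
pose h (r : 'I_p.-1) := Ordinal (hlt r).
have hinj : injective h.
  move=> r s /(congr1 val) /= E.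
  have E' : g ^ r = g ^ s %[mod p].
    by have := prim_nz _ _ r pp pg; have := prim_nz _ _ s pp pg; lia.
  have := prim_inj _ _ _ _ pp pg E'; by rewrite !modn_small // => /val_inj.
have -> : \sum_(r < p.-1) z ^+ (g ^ r)%N = \sum_(r < p.-1) z ^+ (h r).+1.
  apply: eq_bigr => r _ /=; rewrite -(expr_mod _ zp); congr (_ ^+ _).
  by have := prim_nz _ _ r pp pg; lia.
have -> : \sum_(r < p.-1) z ^+ (h r).+1 = \sum_(j < p.-1) z ^+ j.+1.
  by rewrite [RHS](reindex_inj hinj).
have := geo _ _ _ zp z1; rewrite -(prednK p0) big_ord_recl /= expr0.
by move/eqP; rewrite addrC addr_eq0 => /eqP.
Qed.

Lemma iota1_sum (R : nmodType) (F : nat -> R) m :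
  \sum_(k <- iota 1 m) F k = \sum_(i < m) F i.+1.
Proof.
rewrite (iotaDl 1 0) big_map.
have -> : iota 0 m = index_iota 0 m by rewrite /index_iota subn0.
by rewrite big_mkord.
Qed.

Lemma geo1 (R : fieldType) (z : R) m : (0 < m)%N -> z ^+ m = 1 -> z != 1 ->
  \sum_(k <- iota 1 m.-1) z ^+ k = -1.
Proof.
move=> m0 zm z1; rewrite iota1_sum; have := geo _ _ _ zm z1.
rewrite -(prednK m0) big_ord_recl /= expr0 => /eqP; rewrite addrC addr_eq0 => /eqP.
by [].
Qed.

Lemma gper (R : fieldType) p g (Z : R) c i : prime p -> prim_root_mod p g -> Z ^+ p = 1 ->
  Z ^+ (g ^ (i + c * p.-1))%N = Z ^+ (g ^ i)%N.
Proof.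
move=> pp pg Zp; rewrite -(expr_mod (g ^ i) Zp) -(expr_mod _ Zp).
by rewrite (prim_modexp _ _ i pp pg) (prim_modexp _ _ (i + _) pp pg) -modnDmr modnMl addn0.
Qed.

Lemma gsum (R : fieldType) p g (Z : R) c j : prime p -> prim_root_mod p g ->
  Z ^+ p = 1 -> Z != 1 -> \sum_(s < c * p.-1) Z ^+ (g ^ (s + j))%N = - c%:R.
Proof.
move=> pp pg Zp Z1.
rewrite (shift_sum _ (fun s => Z ^+ (g ^ s)%N) _ _ j); last first.
  by move=> i; rewrite (gper _ _ _ _ c i pp pg Zp).
rewrite (per_sum _ (fun s => Z ^+ (g ^ s)%N)); last first.
  by move=> i; have := gper _ _ _ _ 1 i pp pg Zp; rewrite mul1n.
by rewrite (sum_gpow _ _ _ _ pp pg Zp Z1) mulNrn.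
Qed.

Lemma big_ord_mem (R : nmodType) n (s : seq nat) (F : nat -> R) : uniq s ->
  (forall y, y \in s -> (y < n)%N) -> \sum_(i < n | (i : nat) \in s) F i = \sum_(i <- s) F i.
Proof.
move=> us sn; rewrite -(big_mkord (fun i => i \in s)) -big_filter.
apply: perm_big; apply: uniq_perm; rewrite ?filter_uniq ?iota_uniq // => y.
rewrite mem_filter mem_iota add0n subn0; case ys: (y \in s) => //=.
by rewrite sn.
Qed.

Section Main.
Variables (n1 n2 g u : nat) (K : finFieldType) (L : fieldExtType K) (beta : L).
Hypotheses (pn1 : prime n1) (pn2 : prime n2) (neq : n1 != n2)
  (gcd6 : gcdn (n1 - 1) (n2 - 1) = 6%N)
  (pg1 : prim_root_mod n1 g) (pg2 : prim_root_mod n2 g)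
  (u1 : u = g %[mod n1]) (u2 : u = 1 %[mod n2])
  (prb : (n1 * n2).-primitive_root beta).

Local Open Scope nat_scope.
Definition aa := (n1 - 1) %/ 6.
Definition bb := (n2 - 1) %/ 6.

Lemma n1E : n1.-1 = 6 * aa.
Proof.
have d : 6 %| n1 - 1 by rewrite -gcd6 dvdn_gcdl.
by rewrite /aa mulnC divnK // subn1.
Qed.

Lemma n2E : n2.-1 = 6 * bb.
Proof.
have d : 6 %| n2 - 1 by rewrite -gcd6 dvdn_gcdr.
by rewrite /bb mulnC divnK // subn1.
Qed.

Lemma aa_gt0 : 0 < aa.
Proof. have := prime_gt1 pn1; have := n1E; lia. Qed.
Lemma bb_gt0 : 0 < bb.
Proof. have := prime_gt1 pn2; have := n2E; lia. Qed.

Lemma cop_ab : coprime aa bb.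
Proof.
have := gcd6; rewrite !subn1 n1E n2E -muln_gcdr.
by rewrite /coprime => H; apply/eqP; lia.
Qed.

Lemma cop12 : coprime n1 n2.
Proof. by rewrite prime_coprime // dvdn_prime2. Qed.

Lemma eE : wh_e n1 n2 = aa * n2.-1.
Proof.
by rewrite /wh_e !subn1 n1E n2E -mulnA [6 * _]mulnC mulnK.
Qed.

Lemma eE' : wh_e n1 n2 = bb * n1.-1.
Proof. by rewrite eE n1E n2E; lia. Qed.

Lemma e_gt0 : 0 < wh_e n1 n2.
Proof. by rewrite eE n2E muln_gt0 aa_gt0 muln_gt0 bb_gt0. Qed.

Lemma modn12 x y : x = y %[mod n1] -> x = y %[mod n2] -> x = y %[mod n1 * n2].
Proof. by move=> /eqP h1 /eqP h2; apply/eqP; rewrite chinese_remainder ?h1 ?h2 // cop12. Qed.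

Lemma mod_n_1 x : x %% (n1 * n2) = x %[mod n1].
Proof. by rewrite modn_dvdm // dvdn_mulr. Qed.
Lemma mod_n_2 x : x %% (n1 * n2) = x %[mod n2].
Proof. by rewrite modn_dvdm // dvdn_mull. Qed.

Lemma cls_res1 s m : g ^ s * u ^ m %% (n1 * n2) = g ^ (s + m) %[mod n1].
Proof.
by rewrite mod_n_1 -modnMmr -modnXm u1 modnXm modnMmr expnD.
Qed.

Lemma cls_res2 s m : g ^ s * u ^ m %% (n1 * n2) = g ^ s %[mod n2].
Proof.
by rewrite mod_n_2 -modnMmr -modnXm u2 modnXm exp1n modnMmr muln1.
Qed.

Lemma mem_cls x m : x \in whD n1 n2 g u m ->
  exists2 s, s < wh_e n1 n2 & x = g ^ s * u ^ m %% (n1 * n2).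
Proof. by case/mapP => s; rewrite mem_iota add0n => /andP[_ ?] ->; exists s. Qed.

Lemma mod_e s t : s = t %[mod n1.-1] -> s = t %[mod n2.-1] -> s = t %[mod wh_e n1 n2].
Proof.
wlog le: s t / t <= s.
  move=> W; case: (leqP t s) => [/W//|/ltnW/W H] E1 E2; by rewrite H.
move=> /eqP E1 /eqP E2; apply/eqP.
rewrite (eqn_mod_dvd _ le) in E1; rewrite (eqn_mod_dvd _ le) in E2.
rewrite (eqn_mod_dvd _ le).
rewrite n1E in E1; rewrite n2E in E2.
have d6 : 6 %| s - t by apply: dvdn_trans E1; apply: dvdn_mulr.
move: d6 E1 E2 => /dvdnP[d ->]; rewrite ![_ * 6]mulnC !dvdn_pmul2l // => Ea Eb.
rewrite eE n2E mulnCA dvdn_pmul2l //.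
by rewrite Gauss_dvd ?cop_ab // Ea Eb.
Qed.

Lemma cls_eq s t m m' : s < wh_e n1 n2 -> t < wh_e n1 n2 -> m < 6 -> m' < 6 ->
  g ^ s * u ^ m %% (n1 * n2) = g ^ t * u ^ m' %% (n1 * n2) -> s = t /\ m = m'.
Proof.
move=> se te m6 m'6 E.
have E1 : g ^ (s + m) = g ^ (t + m') %[mod n1] by rewrite -!cls_res1 E.
have E2 : g ^ s = g ^ t %[mod n2] by rewrite -(cls_res2 s m) -(cls_res2 t m') E.
have F1 := prim_inj _ _ _ _ pn1 pg1 E1.
have F2 := prim_inj _ _ _ _ pn2 pg2 E2.
have G1 : s + m = t + m' %[mod 6] by rewrite -(modn_dvdm _ (dvdn_mulr aa (dvdnn 6))) -n1E F1 n1E modn_dvdm ?dvdn_mulr.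
have G2 : s = t %[mod 6] by rewrite -(modn_dvdm _ (dvdn_mulr bb (dvdnn 6))) -n2E F2 n2E modn_dvdm ?dvdn_mulr.
have mm : m = m'.
  by move: G1; rewrite -modnDml G2 modnDml => /eqP; rewrite eqn_modDl !modn_small // => /eqP.
subst m'; split=> //.
have F1' : s = t %[mod n1.-1] by apply/eqP; rewrite -(eqn_modDr m); apply/eqP.
by have := mod_e _ _ F1' F2; rewrite !modn_small.
Qed.

Lemma cls_uniq m : m < 6 -> uniq (whD n1 n2 g u m).
Proof.
move=> m6; rewrite map_inj_in_uniq ?iota_uniq // => s t.
rewrite !mem_iota !add0n => /andP[_ se] /andP[_ te] E.
by case: (cls_eq s t m m se te m6 m6 E).
Qed.

Lemma cls_disj x m m' : m < 6 -> m' < 6 -> x \in whD n1 n2 g u m ->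
  x \in whD n1 n2 g u m' -> m = m'.
Proof.
move=> m6 m'6 /mem_cls[s se ->] /mem_cls[t te E].
by case: (cls_eq s t m m' se te m6 m'6 E).
Qed.

Lemma cls_lt x m : x \in whD n1 n2 g u m -> x < n1 * n2.
Proof.
move=> /mem_cls[s _ ->]; rewrite ltn_pmod // muln_gt0 prime_gt0 // prime_gt0 //.
Qed.

Lemma N1_mod x : x \in whN1 n1 n2 -> x %% n1 = 0.
Proof. by case/mapP => k _ ->; rewrite modnMl. Qed.

Lemma cls_notN1 x m : x \in whD n1 n2 g u m -> x \notin whN1 n1 n2.
Proof.
move=> /mem_cls[s _ ->]; apply/negP => /N1_mod.
rewrite cls_res1 => /eqP; apply/negP; exact: prim_nz.
Qed.

Lemma N1_lt x : x \in whN1 n1 n2 -> x < n1 * n2.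
Proof.
case/mapP => k; rewrite mem_iota => /andP[k1 k2] ->.
have := prime_gt1 pn1; have := prime_gt1 pn2; move: k1 k2; nia.
Qed.

Lemma N1_uniq : uniq (whN1 n1 n2).
Proof.
rewrite map_inj_in_uniq ?iota_uniq // => x y _ _ /eqP.
by rewrite eqn_pmul2r ?prime_gt0 // => /eqP.
Qed.

Lemma poly3_uniq j : j < 4 -> uniq (whN1 n1 n2 ++ whD n1 n2 g u j ++
   whD n1 n2 g u j.+1 ++ whD n1 n2 g u j.+2).
Proof.
move=> j4; rewrite !cat_uniq N1_uniq !cls_uniq //; try lia.
rewrite !has_cat !negb_or.
have nN x m : x \in whD n1 n2 g u m -> x \in whN1 n1 n2 = false.
  by move=> /cls_notN1 /negPf.
have dd m m' x : m < 6 -> m' < 6 -> m != m' -> x \in whD n1 n2 g u m ->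
   x \in whD n1 n2 g u m' = false.
  move=> ? ? ne xm; apply/negP => xm'; move/eqP: ne; apply.
  exact: cls_disj xm xm'.
rewrite /=; repeat (apply/andP; split) => //; apply/hasPn => x.
- by move/nN => ->.
- by move/nN => ->.
- by move/nN => ->.
- by move/dd => ->//; lia.
- by move/dd => ->//; lia.
- by move/dd => ->//; lia.
Qed.

Local Open Scope ring_scope.
Let cop := cop12.
Let w1 := chinese n1 n2 1 0.
Let w2 := chinese n1 n2 0 1.
Let z1 := beta ^+ w1.
Let z2 := beta ^+ w2.

Lemma w1a : (w1 = 1 %[mod n1])%N. Proof. by rewrite /w1 chinese_modl. Qed.
Lemma w1b : (w1 = 0 %[mod n2])%N. Proof. by rewrite /w1 chinese_modr. Qed.
Lemma w2a : (w2 = 0 %[mod n1])%N. Proof. by rewrite /w2 chinese_modl. Qed.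
Lemma w2b : (w2 = 1 %[mod n2])%N. Proof. by rewrite /w2 chinese_modr. Qed.

Lemma beta_mod x y : x = y %[mod n1 * n2] -> beta ^+ x = beta ^+ y.
Proof.
move=> E; have bn := prim_expr_order prb.
by rewrite -(expr_mod x bn) E expr_mod.
Qed.

Lemma beta1 x : (beta ^+ x == 1) = (n1 * n2 %| x)%N.
Proof. by rewrite (prim_order_dvd prb). Qed.

Lemma z1_1 x : (z1 ^+ x == 1) = (n1 %| x)%N.
Proof.
rewrite /z1 -exprM beta1 Gauss_dvd //.
have w1a : (w1 = 1 %[mod n1])%N by rewrite /w1 chinese_modl.
have w1b : (w1 = 0 %[mod n2])%N by rewrite /w1 chinese_modr.
have -> : (n2 %| w1 * x)%N by apply: dvdn_mulr; apply/eqP; rewrite w1b mod0n.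
rewrite andbT Gauss_dvdr // -coprime_modr w1a coprime_modr coprimen1 //.
Qed.

Lemma z2_1 x : (z2 ^+ x == 1) = (n2 %| x)%N.
Proof.
rewrite /z2 -exprM beta1 Gauss_dvd //.
have w2a : (w2 = 0 %[mod n1])%N by rewrite /w2 chinese_modl.
have w2b : (w2 = 1 %[mod n2])%N by rewrite /w2 chinese_modr.
have -> : (n1 %| w2 * x)%N by apply: dvdn_mulr; apply/eqP; rewrite w2a mod0n.
rewrite Gauss_dvdr // -coprime_modr w2b coprime_modr coprimen1 //.
Qed.

Lemma z1n : z1 ^+ n1 = 1. Proof. by apply/eqP; rewrite z1_1. Qed.
Lemma z2n : z2 ^+ n2 = 1. Proof. by apply/eqP; rewrite z2_1. Qed.

Lemma betaE x : beta ^+ x = z1 ^+ (x %% n1) * z2 ^+ (x %% n2).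
Proof.
rewrite !expr_mod ?z1n ?z2n // /z1 /z2 -!exprM -exprD.
apply: beta_mod; apply: modn12 => //.
  by rewrite -mulnDl -modnMml -modnDm w1a w2a mod0n addn0 modn_mod modnMml mul1n.
by rewrite -mulnDl -modnMml -modnDm w1b w2b mod0n add0n modn_mod modnMml mul1n.
Qed.


Let e := wh_e n1 n2.
Definition P1 r := z1 ^+ (g ^ r)%N.
Definition P2 t := z2 ^+ (g ^ t)%N.

Lemma betaP x r t : (x = g ^ r %[mod n1])%N -> (x = g ^ t %[mod n2])%N ->
  beta ^+ x = P1 r * P2 t.
Proof. by rewrite betaE => -> ->; rewrite !expr_mod ?z1n ?z2n. Qed.

Lemma P1mod r r' : (r = r' %[mod n1.-1])%N -> P1 r = P1 r'.
Proof.
move=> E; rewrite /P1 -(expr_mod (g ^ r) z1n) -(expr_mod (g ^ r') z1n).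
by rewrite (prim_modexp _ _ r pn1 pg1) (prim_modexp _ _ r' pn1 pg1) E.
Qed.

Lemma P2mod r r' : (r = r' %[mod n2.-1])%N -> P2 r = P2 r'.
Proof.
move=> E; rewrite /P2 -(expr_mod (g ^ r) z2n) -(expr_mod (g ^ r') z2n).
by rewrite (prim_modexp _ _ r pn2 pg2) (prim_modexp _ _ r' pn2 pg2) E.
Qed.

Definition G m s := P1 (s + m) * P2 s.
Definition H m := \sum_(s < e) G m s.

Lemma Gper m s : G m (s + e) = G m s.
Proof.
rewrite /G; congr (_ * _).
  by apply: P1mod; rewrite addnAC /e eE' -modnDmr modnMl addn0.
by apply: P2mod; rewrite /e eE -modnDmr modnMl addn0.
Qed.

Lemma H6 m : H (m + 6) = H m.
Proof.
pose c := (6 * chinese aa bb 1 0)%N.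
have c1 : (c = 6 %[mod n1.-1])%N.
  by rewrite n1E /c -muln_modr chinese_modl ?cop_ab // muln_modr muln1.
have c2 : (c = 0 %[mod n2.-1])%N.
  by rewrite n2E /c -muln_modr chinese_modr ?cop_ab // !mod0n muln0.
rewrite /H -(shift_sum _ (G m) e (Gper m) c); apply: eq_bigr => s _.
rewrite /G; congr (_ * _).
  by apply: P1mod; rewrite addnA [in RHS]addnAC -[in RHS]modnDmr c1 modnDmr.
by apply: P2mod; rewrite -[in RHS]modnDmr c2 mod0n addn0.
Qed.


Lemma P1per i : P1 (i + n1.-1) = P1 i.
Proof. by apply: P1mod; rewrite modnDr. Qed.
Lemma P2per i : P2 (i + n2.-1) = P2 i.
Proof. by apply: P2mod; rewrite modnDr. Qed.

Lemma z1_neq1 : z1 != 1.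
Proof. by rewrite -[z1]expr1 z1_1 dvdn1 gtn_eqF ?prime_gt1. Qed.
Lemma z2_neq1 : z2 != 1.
Proof. by rewrite -[z2]expr1 z2_1 dvdn1 gtn_eqF ?prime_gt1. Qed.

Lemma sumP1 t : \sum_(r < n1.-1) P1 (r + t)%N = -1.
Proof.
rewrite (shift_sum _ P1 _ P1per t).
exact: (sum_gpow _ _ _ _ pn1 pg1 z1n z1_neq1).
Qed.

Lemma sumP2 t : \sum_(r < n2.-1) P2 (r + t)%N = -1.
Proof.
rewrite (shift_sum _ P2 _ P2per t).
exact: (sum_gpow _ _ _ _ pn2 pg2 z2n z2_neq1).
Qed.

Lemma Hsum : \sum_(m < 6) H m = 1.
Proof.
have step1 m : H m = \sum_(t < n2.-1) P2 t * \sum_(w < aa) P1 (w * n2.-1 + t + m)%N.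
  rewrite /H /e eE block_sum exchange_big /=; apply: eq_bigr => t _.
  rewrite mulr_sumr; apply: eq_bigr => w _; rewrite /G mulrC; congr (_ * _).
  by apply: P2mod; rewrite modnMDl.
have hlt (w : 'I_aa) : (bb * w %% aa < aa)%N by rewrite ltn_pmod // aa_gt0.
pose h (w : 'I_aa) := Ordinal (hlt w).
have hinj : injective h.
  move=> w w' /(congr1 val) /= E.
  have cba : coprime bb aa by rewrite coprime_sym cop_ab.
  have := modn_cancel _ _ _ _ cba E.
  by rewrite !modn_small // => /val_inj.
have inner t : \sum_(m < 6) \sum_(w < aa) P1 (w * n2.-1 + t + m)%N = -1.
  have E w m : P1 (w * n2.-1 + t + m)%N = P1 (6 * (bb * w %% aa) + (t + m))%N.
    apply: P1mod; rewrite n2E n1E muln_modr modnDml.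
    by rewrite addnA mulnA [(w * 6)%N]mulnC -mulnA [(w * bb)%N]mulnC.
  have E2 x : \sum_(w < aa) P1 (6 * (bb * w %% aa) + x)%N = \sum_(w < aa) P1 (6 * w + x)%N.
    by rewrite [RHS](reindex_inj hinj).
  rewrite (eq_bigr (fun m : 'I_6 => \sum_(w < aa) P1 (6 * w + (t + m))%N)); last first.
    by move=> m _; rewrite -E2; apply: eq_bigr => w _; rewrite E.
  rewrite exchange_big /= -(sumP1 t) n1E mulnC (block_sum _ (fun r => P1 (r + t)%N)) /=.
  apply: eq_bigr => w _; apply: eq_bigr => m _; congr P1; lia.
under eq_bigr => m _ do rewrite step1.
rewrite exchange_big /=.
rewrite (eq_bigr (fun t : 'I_n2.-1 => - P2 t)).
  have S2 : \sum_(t < n2.-1) P2 t = -1.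
    by rewrite -(sumP2 0); apply: eq_bigr => i _; rewrite addn0.
  by rewrite sumrN S2 opprK.
by move=> t _; rewrite -mulr_sumr inner mulrN1.
Qed.


Lemma iota_e : iota 0 e = index_iota 0 e.
Proof. by rewrite /index_iota subn0. Qed.

Lemma sumD x t k j : (x = g ^ (t + k) %[mod n1])%N -> (x = g ^ t %[mod n2])%N ->
  \sum_(y <- whD n1 n2 g u j) beta ^+ (x * y) = H (k + j).
Proof.
move=> x1 x2; rewrite big_map -/e iota_e big_mkord /H.
rewrite -(shift_sum _ (G (k + j)) e (Gper (k + j)) t); apply: eq_bigr => s _.
rewrite /G (betaP _ (s + t + (k + j)) (s + t)) //.
  rewrite -modnMm x1 cls_res1 modnMm -expnD; congr (_ ^ _ %% _)%N; lia.
by rewrite -modnMm x2 cls_res2 modnMm -expnD addnC.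
Qed.

Lemma not_dvd2 x : coprime x n2 -> ~~ (n2 %| x)%N.
Proof.
move=> cx; apply/negP => d; move: cx; rewrite /coprime (gcdn_idPr d).
by rewrite gtn_eqF ?prime_gt1.
Qed.
Lemma not_dvd1 x : coprime x n1 -> ~~ (n1 %| x)%N.
Proof.
move=> cx; apply/negP => d; move: cx; rewrite /coprime (gcdn_idPr d).
by rewrite gtn_eqF ?prime_gt1.
Qed.

Lemma sumN1 x : coprime x n2 -> \sum_(y <- whN1 n1 n2) beta ^+ (x * y) = -1.
Proof.
move=> cx; rewrite big_map subn1.
have -> : \sum_(j <- iota 1 n2.-1) beta ^+ (x * (j * n1)) =
          \sum_(j <- iota 1 n2.-1) (beta ^+ (x * n1)) ^+ j.
  by apply: eq_bigr => i _; rewrite -exprM; congr (_ ^+ _); lia.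
apply: geo1; first exact: prime_gt0.
  by rewrite -exprM; apply/eqP; rewrite beta1 -mulnA dvdn_mull.
rewrite beta1 [(x * n1)%N]mulnC dvdn_pmul2l ?prime_gt0 //.
exact: not_dvd2.
Qed.

Lemma sumD_N1 x j : (x %% n1 = 0)%N -> coprime x n2 ->
  \sum_(y <- whD n1 n2 g u j) beta ^+ (x * y) = - aa%:R.
Proof.
move=> x1 cx; rewrite big_map -/e iota_e big_mkord /e eE.
rewrite -(gsum _ _ _ (z2 ^+ x) aa 0 pn2 pg2); first last.
- by rewrite z2_1; exact: not_dvd2.
- by rewrite exprAC z2n expr1n.
apply: eq_bigr => s _; rewrite betaE addn0.
rewrite -modnMm x1 mul0n mod0n expr0 mul1r.
have E : ((x * (g ^ s * u ^ j %% (n1 * n2))) %% n2 = (x * g ^ s) %% n2)%N.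
  by rewrite -modnMmr cls_res2 modnMmr.
by rewrite E expr_mod ?z2n // exprM.
Qed.

Lemma sumD_N2 x j : (x %% n2 = 0)%N -> coprime x n1 ->
  \sum_(y <- whD n1 n2 g u j) beta ^+ (x * y) = - bb%:R.
Proof.
move=> x2 cx; rewrite big_map -/e iota_e big_mkord /e eE'.
rewrite -(gsum _ _ _ (z1 ^+ x) bb j pn1 pg1); first last.
- by rewrite z1_1; exact: not_dvd1.
- by rewrite exprAC z1n expr1n.
apply: eq_bigr => s _; rewrite betaE.
rewrite -[((x * _) %% n2)%N]modnMm x2 mul0n mod0n expr0 mulr1.
have E : ((x * (g ^ s * u ^ j %% (n1 * n2))) %% n1 = (x * g ^ (s + j)) %% n1)%N.
  by rewrite -modnMmr cls_res1 modnMmr.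
by rewrite E expr_mod ?z1n // exprM.
Qed.

Lemma sumN1_N2 x : (x %% n2 = 0)%N ->
  \sum_(y <- whN1 n1 n2) beta ^+ (x * y) = (n2.-1)%:R.
Proof.
move=> x2; rewrite big_map subn1 iota1_sum.
rewrite (eq_bigr (fun _ => 1)) ?sumr_const ?card_ord // => i _.
rewrite (beta_mod _ 0) ?expr0 //; apply: modn12.
  by rewrite mod0n mulnA modnMl.
by rewrite mod0n -modnMml x2 mul0n mod0n.
Qed.

Lemma eval3 j x : (j < 4)%N ->
  evalL (setpoly K (n1 * n2) (fun i => [|| i \in whN1 n1 n2, i \in whD n1 n2 g u j,
                                    i \in whD n1 n2 g u j.+1 | i \in whD n1 n2 g u j.+2]))
        (beta ^+ x) =
  \sum_(y <- whN1 n1 n2) beta ^+ (x * y) + (\sum_(y <- whD n1 n2 g u j) beta ^+ (x * y) +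
  (\sum_(y <- whD n1 n2 g u j.+1) beta ^+ (x * y) + \sum_(y <- whD n1 n2 g u j.+2) beta ^+ (x * y))).
Proof.
move=> j4; rewrite /evalL /setpoly raddf_sum horner_sum.
under eq_bigr => i _ do rewrite /= map_polyXn hornerXn -exprM.
rewrite (eq_bigl (fun i : 'I_(n1 * n2) => (i : nat) \in whN1 n1 n2 ++ whD n1 n2 g u j ++
   whD n1 n2 g u j.+1 ++ whD n1 n2 g u j.+2)); last by move=> i; rewrite !mem_cat.
rewrite (big_ord_mem _ _ _ (fun i => beta ^+ (x * i))) ?poly3_uniq // ?big_cat //.
move=> y; rewrite !mem_cat => /or4P[/N1_lt|/cls_lt|/cls_lt|/cls_lt] //.
Qed.

Lemma valsD x k t : (x = g ^ (t + k) %[mod n1])%N -> (x = g ^ t %[mod n2])%N ->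
  [/\ evalL (S_poly K n1 n2 g u) (beta ^+ x) = -1 + (H (k + 0) + (H (k + 1) + H (k + 2))),
      evalL (T_poly K n1 n2 g u) (beta ^+ x) = -1 + (H (k + 1) + (H (k + 2) + H (k + 3))) &
      evalL (M_poly K n1 n2 g u) (beta ^+ x) = -1 + (H (k + 2) + (H (k + 3) + H (k + 4)))].
Proof.
move=> x1 x2.
have cx : coprime x n2.
  by rewrite -coprime_modl x2 coprime_modl coprimeXl // prim_coprime.
rewrite /S_poly /T_poly /M_poly; split.
- by rewrite (eval3 0) // sumN1 // !(sumD x t k).
- by rewrite (eval3 1) // sumN1 // !(sumD x t k).
- by rewrite (eval3 2) // sumN1 // !(sumD x t k).
Qed.

Lemma valsN1 x : (x %% n1 = 0)%N -> coprime x n2 ->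
  [/\ evalL (S_poly K n1 n2 g u) (beta ^+ x) = -1 + (- aa%:R + (- aa%:R + - aa%:R)),
      evalL (T_poly K n1 n2 g u) (beta ^+ x) = -1 + (- aa%:R + (- aa%:R + - aa%:R)) &
      evalL (M_poly K n1 n2 g u) (beta ^+ x) = -1 + (- aa%:R + (- aa%:R + - aa%:R))].
Proof.
move=> x1 cx; rewrite /S_poly /T_poly /M_poly; split.
- by rewrite (eval3 0) // sumN1 // !sumD_N1.
- by rewrite (eval3 1) // sumN1 // !sumD_N1.
- by rewrite (eval3 2) // sumN1 // !sumD_N1.
Qed.

Lemma valsN2 x : (x %% n2 = 0)%N -> coprime x n1 ->
  [/\ evalL (S_poly K n1 n2 g u) (beta ^+ x) = (n2.-1)%:R + (- bb%:R + (- bb%:R + - bb%:R)),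
      evalL (T_poly K n1 n2 g u) (beta ^+ x) = (n2.-1)%:R + (- bb%:R + (- bb%:R + - bb%:R)) &
      evalL (M_poly K n1 n2 g u) (beta ^+ x) = (n2.-1)%:R + (- bb%:R + (- bb%:R + - bb%:R))].
Proof.
move=> x2 cx; rewrite /S_poly /T_poly /M_poly; split.
- by rewrite (eval3 0) // sumN1_N2 // !sumD_N2.
- by rewrite (eval3 1) // sumN1_N2 // !sumD_N2.
- by rewrite (eval3 2) // sumN1_N2 // !sumD_N2.
Qed.

Lemma main_sec : let n := (n1 * n2)%N in
  let S := fun x : L => evalL (S_poly K n1 n2 g u) x in
  let T := fun x : L => evalL (T_poly K n1 n2 g u) x in
  let M := fun x : L => evalL (M_poly K n1 n2 g u) x in
  let D := whD n1 n2 g u in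
  forall a : nat, (a < n)%N ->
  (a \in whN1 n1 n2 ->
        [/\ S (beta ^+ a) = - (((n1 + 1) %/ 2)%N%:R),
            T (beta ^+ a) = - (((n1 + 1) %/ 2)%N%:R) &
            M (beta ^+ a) = - (((n1 + 1) %/ 2)%N%:R)]) /\
      (a \in whN2 n1 n2 ->
        [/\ S (beta ^+ a) = ((n2 - 1) %/ 2)%N%:R,
            T (beta ^+ a) = ((n2 - 1) %/ 2)%N%:R &
            M (beta ^+ a) = ((n2 - 1) %/ 2)%N%:R]) /\
      (a \in D 0%N ->
        [/\ S (beta ^+ a) = S beta, T (beta ^+ a) = T beta & M (beta ^+ a) = M beta]) /\
      (a \in D 1%N ->
        [/\ S (beta ^+ a) = T beta, T (beta ^+ a) = M beta
          & M (beta ^+ a) = - (S beta + 1)]) /\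
      (a \in D 2%N ->
        [/\ S (beta ^+ a) = M beta, T (beta ^+ a) = - (S beta + 1)
          & M (beta ^+ a) = - (T beta + 1)]) /\
      (a \in D 3%N ->
        [/\ S (beta ^+ a) = - (S beta + 1), T (beta ^+ a) = - (T beta + 1)
          & M (beta ^+ a) = - (M beta + 1)]) /\
      (a \in D 4%N ->
        [/\ S (beta ^+ a) = - (T beta + 1), T (beta ^+ a) = - (M beta + 1)
          & M (beta ^+ a) = S beta]) /\
      (a \in D 5%N ->
        [/\ S (beta ^+ a) = - (M beta + 1), T (beta ^+ a) = S beta
          & M (beta ^+ a) = T beta]).
Proof.
move=> n S T M D; rewrite {}/n {}/S {}/T {}/M {}/D => a an; cbv beta.
have [S0 T0 M0] := valsD 1 0 0 (erefl _) (erefl _).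
rewrite expr1 in S0 T0 M0.
have Hs : H 0 + H 1 + H 2 + H 3 + H 4 + H 5 = 1.
  by have := Hsum; rewrite !big_ord_recr big_ord0 /= add0r.
have H5e : H 5 = 1 - (H 0 + H 1 + H 2 + H 3 + H 4) by rewrite -Hs; ring.
have h6 : H 6 = H 0 := H6 0.
have h7 : H 7 = H 1 := H6 1.
have h8 : H 8 = H 2 := H6 2.
have h9 : H 9 = H 3 := H6 3.
have caseD k : a \in whD n1 n2 g u k ->
   [/\ evalL (S_poly K n1 n2 g u) (beta ^+ a) = -1 + (H (k + 0) + (H (k + 1) + H (k + 2))),
      evalL (T_poly K n1 n2 g u) (beta ^+ a) = -1 + (H (k + 1) + (H (k + 2) + H (k + 3))) &
      evalL (M_poly K n1 n2 g u) (beta ^+ a) = -1 + (H (k + 2) + (H (k + 3) + H (k + 4)))].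
  move=> /mem_cls[t _ ->]; exact: valsD (cls_res1 t k) (cls_res2 t k).
split.
  case/mapP => k0; rewrite mem_iota => /andP[k1 k2] ->.
  have cp : coprime (k0 * n1) n2.
    rewrite coprimeMl cop andbT coprime_sym prime_coprime //.
    rewrite gtnNdvd //; lia.
  have [-> -> ->] := valsN1 (k0 * n1) (modnMl _ _) cp.
  have -> : ((n1 + 1) %/ 2 = 3 * aa + 1)%N.
    have := n1E; have := prime_gt1 pn1; move=> ? ?.
    have -> : (n1 + 1 = (3 * aa + 1) * 2)%N by lia.
    by rewrite mulnK.
  rewrite natrD natrM; split; ring.
split.
  case/mapP => k0; rewrite mem_iota => /andP[k1 k2] ->.
  have cp : coprime (k0 * n2) n1.
    rewrite coprimeMl (coprime_sym n2) cop andbT coprime_sym prime_coprime //.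
    rewrite gtnNdvd //; lia.
  have [-> -> ->] := valsN2 (k0 * n2) (modnMl _ _) cp.
  have -> : ((n2 - 1) %/ 2 = 3 * bb)%N.
    have := n2E; have := prime_gt1 pn2; move=> ? ?.
    have -> : (n2 - 1 = 3 * bb * 2)%N by lia.
    by rewrite mulnK.
  rewrite n2E !natrM; split; ring.
do 5 (split; first (move/caseD => [-> -> ->];
  rewrite S0 T0 M0 !addnE /= ?h6 ?h7 ?h8 ?h9 ?H5e; split; ring)).
move/caseD => [-> -> ->];
  rewrite S0 T0 M0 !addnE /= ?h6 ?h7 ?h8 ?h9 ?H5e; split; ring.
Qed.

End Main.

Theorem lemma4 (n1 n2 g u p q k : nat) (K : finFieldType) (L : fieldExtType K) (beta : L) :
  prime n1 -> prime n2 -> odd n1 -> odd n2 -> n1 != n2 ->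
  gcdn (n1 - 1) (n2 - 1) = 6%N ->
  prim_root_mod n1 g -> prim_root_mod n2 g ->
  (u = g %[mod n1])%N -> (u = 1 %[mod n2])%N ->
  prime p -> (0 < k)%N -> q = (p ^ k)%N -> #|K| = q -> coprime q (n1 * n2) ->
  (n1 * n2).-primitive_root beta ->
  let n := (n1 * n2)%N in
  let S := fun x : L => evalL (S_poly K n1 n2 g u) x in
  let T := fun x : L => evalL (T_poly K n1 n2 g u) x in
  let M := fun x : L => evalL (M_poly K n1 n2 g u) x in
  let D := whD n1 n2 g u in
  forall a : nat, (a < n)%N ->
  (a \in whN1 n1 n2 ->
        [/\ S (beta ^+ a) = - (((n1 + 1) %/ 2)%N%:R),
            T (beta ^+ a) = - (((n1 + 1) %/ 2)%N%:R) &
            M (beta ^+ a) = - (((n1 + 1) %/ 2)%N%:R)]) /\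
      (a \in whN2 n1 n2 ->
        [/\ S (beta ^+ a) = ((n2 - 1) %/ 2)%N%:R,
            T (beta ^+ a) = ((n2 - 1) %/ 2)%N%:R &
            M (beta ^+ a) = ((n2 - 1) %/ 2)%N%:R]) /\
      (a \in D 0%N ->
        [/\ S (beta ^+ a) = S beta, T (beta ^+ a) = T beta & M (beta ^+ a) = M beta]) /\
      (a \in D 1%N ->
        [/\ S (beta ^+ a) = T beta, T (beta ^+ a) = M beta
          & M (beta ^+ a) = - (S beta + 1)]) /\
      (a \in D 2%N ->
        [/\ S (beta ^+ a) = M beta, T (beta ^+ a) = - (S beta + 1)
          & M (beta ^+ a) = - (T beta + 1)]) /\
      (a \in D 3%N ->
        [/\ S (beta ^+ a) = - (S beta + 1), T (beta ^+ a) = - (T beta + 1)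
          & M (beta ^+ a) = - (M beta + 1)]) /\
      (a \in D 4%N ->
        [/\ S (beta ^+ a) = - (T beta + 1), T (beta ^+ a) = - (M beta + 1)
          & M (beta ^+ a) = S beta]) /\
      (a \in D 5%N ->
        [/\ S (beta ^+ a) = - (M beta + 1), T (beta ^+ a) = S beta
          & M (beta ^+ a) = T beta]).
Proof.
move=> pn1 pn2 _ _ neq gcd6 pg1 pg2 u1 u2 _ _ _ _ _ prb.
by apply: main_sec.
Qed.
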